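(* Let $n \geq 2$, let $P_n$ be the path with $n$ vertices, and let $B_n$ be the barbell graph consisting of two disjoint cliques of sizes $\lceil n/2\rceil$ and $\lfloor n/2\rfloor$ connected by a single edge. Then $\mathcal{AC}(P_n) = \mathcal{AC}(B_n) = n-2$.
   Context: Acquaintance time: Let $G=(V,E)$ be a finite connected graph. Initially one agent is placed on each vertex. At any moment, two agents located at the endpoints of a common edge become acquainted (in particular, agents on adjacent vertices at the start are acquainted). In each round one chooses a matching of $G$ (not necessarily maximal), and for every edge of the matching the two agents on its endpoints swap places; after each round, all pairs of agents on adjacent vertices become acquainted. A sequence of matchings after which every pair of agents has been acquainted is a strategy for acquaintance in $G$. The acquaintance time $\mathcal{AC}(G)$ is the minimal number of rounds in a strategy for acquaintance in $G$. *)

(* Defs.v *)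
From mathcomp Require Import all_boot.
Set Implicit Arguments. Unset Strict Implicit. Unset Printing Implicit Defensive.

Definition simple_graph (T : finType) (e : rel T) : Prop :=
  irreflexive e /\ symmetric e.

(* A matching of the graph, encoded as the involution swapping the two
   endpoints of every matched edge and fixing unmatched vertices. *)
Definition is_matching (T : finType) (e : rel T) (m : T -> T) : Prop :=
  forall v, m (m v) = v /\ (m v = v \/ e v (m v)).

(* Agents are named by their initial vertex.  [pos s t a] is the vertex
   occupied by agent a after the first t rounds of the strategy s. *)
Definition pos (T : finType) (s : seq (T -> T)) (t : nat) (a : T) : T :=
  foldl (fun x m => m x) a (take t s).

Definition acquainted (T : finType) (e : rel T) (s : seq (T -> T)) (a b : T) : Prop :=
  exists t, t <= size s /\ e (pos s t a) (pos s t b).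

Definition acq_strategy (T : finType) (e : rel T) (s : seq (T -> T)) : Prop :=
  (forall i, i < size s -> is_matching e (nth id s i)) /\
  (forall a b : T, a != b -> acquainted e s a b).

Definition acq_time_is (T : finType) (e : rel T) (k : nat) : Prop :=
  (exists s, size s = k /\ acq_strategy e s) /\
  (forall s, acq_strategy e s -> k <= size s).

Definition path_graph (n : nat) : rel 'I_n :=
  fun i j => (i.+1 == j :> nat) || (j.+1 == i :> nat).

(* The barbell B_n: cliques on {0,..,c-1} and {c,..,n-1} where c = ceil(n/2),
   joined by the single edge {c-1, c}. *)
Definition barbell_graph (n : nat) : rel 'I_n :=
  fun i j =>
    let c := n - n./2 in
    ((i != j) && ((i < c) == (j < c)))
    || ((i == c.-1 :> nat) && (j == c :> nat))
    || ((j == c.-1 :> nat) && (i == c :> nat)).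

Arguments path_graph n : clear implicits.
Arguments barbell_graph n : clear implicits.

(* Main.v *)
Require Import Defs.
From mathcomp Require Import all_boot zify.
Set Implicit Arguments. Unset Strict Implicit. Unset Printing Implicit Defensive.


Lemma pos0 (T : finType) (s : seq (T -> T)) a : pos s 0 a = a.
Proof. by rewrite /pos take0. Qed.

Lemma posS (T : finType) (s : seq (T -> T)) t a :
  t < size s -> pos s t.+1 a = nth id s t (pos s t a).
Proof. by move=> ht; rewrite /pos (take_nth id ht) foldl_rcons. Qed.

Lemma pos_inj (T : finType) (e : rel T) (s : seq (T -> T)) t :
  (forall i, i < size s -> is_matching e (nth id s i)) -> t <= size s ->
  injective (pos s t).
Proof.
move=> hm; elim: t => [|t IH] ht.
  by move=> x y; rewrite !pos0.
move=> x y; rewrite !posS //= => h.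
apply: IH; first by apply: ltnW.
have [h1 _] := hm t ht (pos s t x); have [h2 _] := hm t ht (pos s t y).
by rewrite -h1 h h2.
Qed.

Lemma strat_mono (T : finType) (e1 e2 : rel T) s :
  (forall u v, e1 u v -> e2 u v) -> acq_strategy e1 s -> acq_strategy e2 s.
Proof.
move=> he [hm ha]; split.
  move=> i hi v; have [h1 h2] := hm i hi v; split=> //.
  by case: h2 => [->|/he]; [left|right].
move=> a b hab; have [t [ht he1]] := ha a b hab.
by exists t; split => //; apply: he.
Qed.

Lemma path_sub_barbell n (u v : 'I_n) : path_graph n u v -> barbell_graph n u v.
Proof.
rewrite /path_graph /barbell_graph => /orP[/eqP h|/eqP h];
  have huv : u != v by apply/negP => /eqP huv; rewrite huv in h; lia.
all: case: (ltnP u (n - n./2)) => hu; case: (ltnP v (n - n./2)) => hv.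
all: rewrite ?huv /= ?hu ?hv /=; try done.
all: try (rewrite leqNgt in hu; rewrite (negbTE hu) /=).
all: try (rewrite leqNgt in hv; rewrite (negbTE hv) /=).
all: try done.
all: apply/orP; first [left; apply/andP; split; apply/eqP; lia | right; apply/andP; split; apply/eqP; lia].
Qed.


Lemma odd_split x : (odd x /\ x = 2 * x./2 + 1) \/ (~~ odd x /\ x = 2 * x./2).
Proof. have := odd_double_half x; rewrite -muln2; case: (odd x) => /=; lia. Qed.

Definition stepf n t v :=
  if odd (v + t) then (if v == 0 then v else v.-1)
  else (if v.+1 < n then v.+1 else v).

Lemma stepf_spec n t v :
  let w := stepf n t v in let h := (v + t)./2 in
  (v + t = 2 * h + 1 /\ v = 0 /\ w = v) \/ (v + t = 2 * h + 1 /\ 0 < v /\ w = v.-1) \/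
  (v + t = 2 * h /\ v.+1 < n /\ w = v.+1) \/ (v + t = 2 * h /\ n <= v.+1 /\ w = v).
Proof.
rewrite /stepf /=; case: (odd_split (v + t)) => [[-> ?]|[/negbTE -> ?]];
  repeat (case: ifP => ?); lia.
Qed.

Lemma stepf_lt n t v : v < n -> stepf n t v < n.
Proof. have := stepf_spec n t v; move: (stepf n t v) ((v+t)./2) => ??; cbv zeta; lia. Qed.

Definition mstep n t : 'I_n -> 'I_n := fun v => insubd v (stepf n t v).
Arguments mstep : clear implicits.

Lemma mstepE n t v : val (mstep n t v) = stepf n t v.
Proof. by rewrite /mstep val_insubd stepf_lt. Qed.

Definition strat n := mkseq (mstep n) (n - 2).

Lemma mstep_match n t : is_matching (path_graph n) (mstep n t).
Proof.
move=> v; split.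
  apply: val_inj; rewrite !mstepE; case: v => v hv /=.
  have := stepf_spec n t v; have := stepf_spec n t (stepf n t v).
  move: (stepf n t (stepf n t v)) (stepf n t v) => ??; cbv zeta; lia.
case: (eqVneq (mstep n t v) v) => h; [by left|right].
move: h; rewrite /path_graph -val_eqE !mstepE; case: v => v hv /=.
have := stepf_spec n t v; move: (stepf n t v) => ?; cbv zeta; lia.
Qed.

Definition F n t a :=
  if ~~ odd a then (if a + t <= n.-1 then a + t else (2 * n).-1 - a - t)
  else (if t <= a then a - t else t - a - 1).

Lemma F_spec n t a :
  let w := F n t a in let h := a./2 in
  (a = 2 * h /\ a + t <= n.-1 /\ w = a + t) \/ (a = 2 * h /\ n.-1 < a + t /\ w = (2 * n).-1 - a - t) \/
  (a = 2 * h + 1 /\ t <= a /\ w = a - t) \/ (a = 2 * h + 1 /\ a < t /\ w = t - a - 1).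
Proof.
rewrite /F /=; case: (odd_split a) => [[-> ?]|[-> ?]];
  repeat (case: ifP => ?); lia.
Qed.

Lemma Fe1 n t a : ~~ odd a -> a + t <= n.-1 -> F n t a = a + t.
Proof. by rewrite /F => -> ->. Qed.
Lemma Fe2 n t a : ~~ odd a -> n.-1 < a + t -> F n t a = (2 * n).-1 - a - t.
Proof. by rewrite /F ltnNge => -> /negbTE ->. Qed.
Lemma Fo1 n t a : odd a -> t <= a -> F n t a = a - t.
Proof. by rewrite /F => -> ->. Qed.
Lemma Fo2 n t a : odd a -> a < t -> F n t a = t - a - 1.
Proof. by rewrite /F ltnNge => -> /negbTE ->. Qed.

Lemma F_step n t a : t.+1 <= n - 2 -> a < n -> stepf n t (F n t a) = F n t.+1 a.
Proof.
move=> ht ha; have := F_spec n t a; have := F_spec n t.+1 a; have := stepf_spec n t (F n t a).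
move: (stepf n t (F n t a)) (F n t a) (F n t.+1 a) => x y z /=.
move: (a./2) ((y + t)./2) => k j.
case=> [[?[??]]|[[?[??]]|[[?[??]]|[?[??]]]]];
case=> [[?[??]]|[[?[??]]|[[?[??]]|[?[??]]]]];
case=> [[?[??]]|[[?[??]]|[[?[??]]|[?[??]]]]]; lia.
Qed.

Lemma pos_strat n t (a : 'I_n) : t <= n - 2 -> val (pos (strat n) t a) = F n t a.
Proof.
elim: t => [|t IH] ht.
  rewrite pos0; case: a => a ha /=; have := F_spec n 0 a; move: (F n 0 a) => ?; cbv zeta; lia.
rewrite posS; last by rewrite size_mkseq.
rewrite nth_mkseq // mstepE IH; last by lia.
by apply: F_step => //.
Qed.

Ltac fin pa pb := split; [lia|]; match goal with |- context [F ?n ?t ?a] =>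
  match goal with |- context [F n t ?b] => (assert (a <> b) by lia);
  have := F_spec n t a; have := F_spec n t b; move: (F n t a) (F n t b) => ??; cbv zeta; move: (a./2) (b./2) pa pb => ????; lia end end.

Lemma strat_ok n : 2 <= n -> acq_strategy (path_graph n) (strat n).
Proof.
move=> hn; split.
  move=> i hi; rewrite nth_mkseq; last by rewrite size_mkseq in hi.
  exact: mstep_match.
have key : forall a b : 'I_n, a < b -> acquainted (path_graph n) (strat n) a b.
  move=> a b hab.
  have ha := ltn_ord a; have hb := ltn_ord b.
  have [t [ht1 ht2]] : exists t, t <= n - 2 /\
     ((F n t a).+1 == F n t b) || ((F n t b).+1 == F n t a).
    case: (odd_split a) => [[oa pa]|[oa pa]]; case: (odd_split b) => [[ob pb]|[ob pb]].
    - exists (a./2 + b./2 + 1); split; first lia.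
      apply/orP; left; apply/eqP.
      rewrite [F _ _ a]Fo2 ?[F _ _ b]Fo1 //; lia.
    - case: (eqVneq (b : nat) a.+1) => hb1.
        exists 0; split; first lia.
        apply/orP; left; apply/eqP.
        rewrite [F _ _ a]Fo1 ?[F _ _ b]Fe1 //; lia.
      exists (n - b./2 + a./2); split; first lia.
      apply/orP; left; apply/eqP.
      rewrite [F _ _ a]Fo2 ?[F _ _ b]Fe2 //; lia.
    - exists (b./2 - a./2); split; first lia.
      apply/orP; left; apply/eqP.
      rewrite [F _ _ a]Fe1 ?[F _ _ b]Fo1 //; lia.
    - exists (n.-1 - a./2 - b./2); split; first lia.
      apply/orP; left; apply/eqP.
      rewrite [F _ _ a]Fe1 ?[F _ _ b]Fe2 //; lia.
  exists t; split; first by rewrite size_mkseq.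
  by rewrite /path_graph !pos_strat.
move=> a b hab; case: (ltngtP a b) => h.
- exact: key.
- have [t [ht he]] := key b a h; exists t; split => //.
  by move: he; rewrite /path_graph orbC.
- by case/eqP: hab; apply: val_inj.
Qed.


Notation cc n := (n - n./2).

Lemma half_facts n : n./2 * 2 <= n <= n./2 * 2 + 1.
Proof. have := odd_double_half n; rewrite -muln2; case: (odd n) => /=; lia. Qed.

Lemma card_lt n k : k <= n -> #|[set x : 'I_n | x < k]| = k.
Proof.
move=> hk; rewrite -sum1_card.
rewrite (eq_bigl (fun i : 'I_n => i < k)); last by move=> i; rewrite inE.
by rewrite (big_ord_narrow hk) sum1_card card_ord.
Qed.

Lemma cross n (u v : 'I_n) : barbell_graph n u v -> u < cc n -> cc n <= v ->
  nat_of_ord u = (cc n).-1 /\ nat_of_ord v = cc n.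
Proof.
rewrite /barbell_graph /= => + hu hv.
rewrite hu ltnNge hv /=.
case/orP => [/orP[/andP[_ /eqP //]|/andP[/eqP h1 /eqP h2]]|/andP[/eqP h1 /eqP h2]]; lia.
Qed.

Lemma barbell_sym n (u v : 'I_n) : barbell_graph n u v = barbell_graph n v u.
Proof.
rewrite /barbell_graph /= [u == v]eq_sym [(v < _) == _]eq_sym.
by rewrite -!orbA [X in _ || X]orbC.
Qed.

Lemma side_change n (m : 'I_n -> 'I_n) (v : 'I_n) :
  is_matching (barbell_graph n) m -> (v < cc n) != (m v < cc n) ->
  (nat_of_ord v = (cc n).-1 /\ nat_of_ord (m v) = cc n) \/ (nat_of_ord v = cc n /\ nat_of_ord (m v) = (cc n).-1).
Proof.
move=> hm hs; have [_ [hv|he]] := hm v.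
  by move: hs; rewrite hv eqxx.
case: (ltnP v (cc n)) => h1.
  move: hs; rewrite h1; case: (ltnP (m v) (cc n)) => h2 // _.
  left; exact: cross.
move: hs; rewrite ltnNge h1 /=; case: (ltnP (m v) (cc n)) => h2 // _.
rewrite barbell_sym in he.
right; have [??] := cross he h2 h1; lia.
Qed.

Definition Pv n (s : seq ('I_n -> 'I_n)) t (x : 'I_n) : nat := nat_of_ord (pos s t x).

Fixpoint fA n (s : seq ('I_n -> 'I_n)) t (x : 'I_n) : bool :=
  if t is t'.+1 then fA s t' x && (Pv s t x < cc n) else x < cc n.
Fixpoint fB n (s : seq ('I_n -> 'I_n)) t (x : 'I_n) : bool :=
  if t is t'.+1 then fB s t' x && (cc n <= Pv s t x) else cc n <= x.
Definition br n (s : seq ('I_n -> 'I_n)) t (x y : 'I_n) :=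
  (Pv s t x == (cc n).-1) && (Pv s t y == cc n).
Fixpoint met n (s : seq ('I_n -> 'I_n)) t (x y : 'I_n) : bool :=
  if t is t'.+1 then met s t' x y || br s t x y else br s 0 x y.
Definition G1 n (s : seq ('I_n -> 'I_n)) t := [set x : 'I_n | fA s t x && (Pv s t x == (cc n).-1)].
Definition G2 n (s : seq ('I_n -> 'I_n)) t := [set x : 'I_n | fB s t x && (Pv s t x == cc n)].
Definition NNs n (s : seq ('I_n -> 'I_n)) t :=
  [set xy : 'I_n * 'I_n | [&& fA s t xy.1, fB s t xy.2 & met s t xy.1 xy.2]].
Definition pps n (s : seq ('I_n -> 'I_n)) t := [set x : 'I_n | (x < cc n) && ~~ fA s t x].
Definition qqs n (s : seq ('I_n -> 'I_n)) t := [set x : 'I_n | (cc n <= x) && ~~ fB s t x].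

Definition Hm n (s : seq ('I_n -> 'I_n)) :=
  forall i, i < size s -> is_matching (barbell_graph n) (nth id s i).

Lemma Pv0 n (s : seq ('I_n -> 'I_n)) x : Pv s 0 x = x.
Proof. by rewrite /Pv pos0. Qed.

Lemma PvS n (s : seq ('I_n -> 'I_n)) t x : t < size s ->
  Pv s t.+1 x = nth id s t (pos s t x).
Proof. by move=> ht; rewrite /Pv posS. Qed.

Lemma fA_all n (s : seq ('I_n -> 'I_n)) t x j : fA s t x -> j <= t -> Pv s j x < cc n.
Proof.
elim: t j => [|t IH] j /=.
  by rewrite leqn0 => h /eqP ->; rewrite Pv0.
move=> /andP[h1 h2]; rewrite leq_eqVlt => /orP[/eqP ->//|]; rewrite ltnS; exact: IH.
Qed.

Lemma fB_all n (s : seq ('I_n -> 'I_n)) t x j : fB s t x -> j <= t -> cc n <= Pv s j x.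
Proof.
elim: t j => [|t IH] j /=.
  by rewrite leqn0 => h /eqP ->; rewrite Pv0.
move=> /andP[h1 h2]; rewrite leq_eqVlt => /orP[/eqP ->//|]; rewrite ltnS; exact: IH.
Qed.

Lemma met_intro n (s : seq ('I_n -> 'I_n)) t x y j : j <= t -> br s j x y -> met s t x y.
Proof.
elim: t => [|t IH] /=.
  by rewrite leqn0 => /eqP ->.
rewrite leq_eqVlt => /orP[/eqP -> ->|]; first by rewrite orbT.
by rewrite ltnS => hj hb; rewrite IH.
Qed.

Lemma card_at n (s : seq ('I_n -> 'I_n)) t (P : pred 'I_n) k :
  Hm s -> t <= size s -> #|[set x | P x && (Pv s t x == k)]| <= 1.
Proof.
move=> hm ht; apply/card_le1_eqP => x y; rewrite !inE => /andP[_ /eqP hx] /andP[_ /eqP hy].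
apply: (pos_inj hm ht); apply: val_inj; rewrite /=.
by move: hx hy; rewrite /Pv => -> ->.
Qed.

Definition Bg n (m : 'I_n -> 'I_n) :=
  [exists v : 'I_n, ((v : nat) == (cc n).-1) && ((m v : nat) == cc n)].

Lemma nb_side n (m : 'I_n -> 'I_n) : is_matching (barbell_graph n) m -> ~~ Bg m ->
  forall v, (m v < cc n) = (v < cc n).
Proof.
move=> hm hb v; case: (boolP ((v < cc n) != (m v < cc n))) => hs; last by move/negPn/eqP: hs.
exfalso; case: (side_change hm hs) => [[h1 h2]|[h1 h2]]; move/negP: hb; apply; apply/existsP.
  by exists v; rewrite h1 h2 !eqxx.
exists (m v); rewrite h2 eqxx /=; have [-> _] := hm v; by rewrite h1.
Qed.

Lemma b_map n (m : 'I_n -> 'I_n) : is_matching (barbell_graph n) m -> Bg m ->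
  forall v, (((m v : nat) == cc n) = ((v : nat) == (cc n).-1)) /\
            (((m v : nat) == (cc n).-1) = ((v : nat) == cc n)).
Proof.
move=> hm /existsP[v0 /andP[/eqP h1 /eqP h2]] v.
have [i0 _] := hm v0; have [iv _] := hm v.
split; apply/eqP/eqP => h.
- have e : m v = m v0 by apply: val_inj; rewrite /= h h2.
  by rewrite -iv e i0.
- have e : v = v0 by apply: val_inj; rewrite /= h h1.
  by rewrite e.
- have e : m v = v0 by apply: val_inj; rewrite /= h h1.
  by rewrite -iv e.
- have e : v = m v0 by apply: val_inj; rewrite /= h h2.
  by rewrite e i0.
Qed.

Lemma pp_step n (s : seq ('I_n -> 'I_n)) t : Hm s -> t < size s ->
  #|pps s t.+1| <= #|pps s t| + #|G1 s t|.
Proof.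
move=> hm ht.
apply: leq_trans (subset_leq_card (_ : pps s t.+1 \subset pps s t :|: G1 s t)) _;
  last by rewrite cardsU leq_subr.
apply/subsetP => x; rewrite !inE /=.
case hf: (fA s t x) => /=; last by rewrite !andbT => ->.
move=> /andP[hx h]; apply/orP; right.
have hlt := fA_all hf (leqnn t).
move: h; rewrite PvS // -leqNgt => h.
have hs : (pos s t x < cc n) != (nth id s t (pos s t x) < cc n).
  by move: hlt; rewrite /Pv => ->; rewrite ltnNge h.
case: (side_change (hm t ht) hs) => [[h1 _]|[h1 _]]; first by rewrite /Pv h1.
by move: hlt; rewrite /Pv h1 ltnn.
Qed.

Lemma qq_step n (s : seq ('I_n -> 'I_n)) t : Hm s -> t < size s ->
  #|qqs s t.+1| <= #|qqs s t| + #|G2 s t|.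
Proof.
move=> hm ht.
apply: leq_trans (subset_leq_card (_ : qqs s t.+1 \subset qqs s t :|: G2 s t)) _;
  last by rewrite cardsU leq_subr.
apply/subsetP => x; rewrite !inE /=.
case hf: (fB s t x) => /=; last by rewrite !andbT => ->.
move=> /andP[hx h]; apply/orP; right.
have hge := fB_all hf (leqnn t).
move: h; rewrite PvS // -ltnNge => h.
have hs : (pos s t x < cc n) != (nth id s t (pos s t x) < cc n).
  by move: hge; rewrite /Pv ltnNge => ->; rewrite h.
case: (side_change (hm t ht) hs) => [[h1 _]|[h1 _]]; last by rewrite /Pv h1.
by move: hge; rewrite /Pv h1; lia.
Qed.

Lemma nb_fA n (s : seq ('I_n -> 'I_n)) t x : Hm s -> t < size s -> ~~ Bg (nth id s t) ->
  fA s t.+1 x = fA s t x.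
Proof.
move=> hm ht hb /=; rewrite PvS // (nb_side (hm t ht) hb).
case hf: (fA s t x) => //=; exact: (fA_all hf (leqnn t)).
Qed.

Lemma nb_fB n (s : seq ('I_n -> 'I_n)) t x : Hm s -> t < size s -> ~~ Bg (nth id s t) ->
  fB s t.+1 x = fB s t x.
Proof.
move=> hm ht hb /=; rewrite PvS // leqNgt (nb_side (hm t ht) hb) -leqNgt.
case hf: (fB s t x) => //=; exact: (fB_all hf (leqnn t)).
Qed.

Lemma NN_nb n (s : seq ('I_n -> 'I_n)) t : Hm s -> t < size s -> ~~ Bg (nth id s t) ->
  #|NNs s t.+1| <= #|NNs s t| + #|G1 s t.+1| * #|G2 s t.+1|.
Proof.
move=> hm ht hb.
apply: leq_trans (subset_leq_card
   (_ : NNs s t.+1 \subset NNs s t :|: setX (G1 s t.+1) (G2 s t.+1))) _;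
  last by rewrite cardsU -cardsX leq_subr.
apply/subsetP => [[x y]]; rewrite !inE /=.
case/and3P => hx hy /orP[hmt|hbr].
  by case/andP: hx => -> _; case/andP: hy => -> _; rewrite hmt.
apply/orP; right; case/andP: hbr => h1 h2.
by rewrite hx hy h1 h2.
Qed.

Lemma b_G1 n (s : seq ('I_n -> 'I_n)) t : Hm s -> t < size s -> Bg (nth id s t) ->
  #|G1 s t.+1| = 0.
Proof.
move=> hm ht hb; apply: eq_card0 => x; rewrite !inE /=.
apply/negP => /andP[/andP[hf _]].
rewrite PvS // (b_map (hm t ht) hb _).2 => /eqP h.
by move: (fA_all hf (leqnn t)); rewrite /Pv h ltnn.
Qed.

Lemma b_G2 n (s : seq ('I_n -> 'I_n)) t : Hm s -> t < size s -> Bg (nth id s t) ->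
  #|G2 s t.+1| = 0.
Proof.
move=> hm ht hb; apply: eq_card0 => x; rewrite !inE /=.
apply/negP => /andP[/andP[hf _]].
rewrite PvS // (b_map (hm t ht) hb _).1 => /eqP h.
by move: (fB_all hf (leqnn t)); rewrite /Pv h; have := half_facts n; have := ltn_ord x; lia.
Qed.

Lemma b_NN n (s : seq ('I_n -> 'I_n)) t : Hm s -> t < size s -> Bg (nth id s t) ->
  #|NNs s t.+1| + #|G1 s t| * #|G2 s t| <= #|NNs s t|.
Proof.
move=> hm ht hb.
have sub : NNs s t.+1 \subset NNs s t.
  apply/subsetP => [[x y]]; rewrite !inE /=.
  case/and3P => /andP[hx _] /andP[hy _] /orP[hmt|hbr]; first by rewrite hx hy hmt.
  exfalso; case/andP: hbr; rewrite PvS // (b_map (hm t ht) hb _).2 => /eqP h _.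
  by move: (fA_all hx (leqnn t)); rewrite /Pv h ltnn.
case: (set_0Vmem (G1 s t)) => [->|[x hx]]; first by rewrite cards0 addn0 subset_leq_card.
case: (set_0Vmem (G2 s t)) => [->|[y hy]]; first by rewrite cards0 muln0 addn0 subset_leq_card.
have h1 : #|G1 s t| <= 1 by apply: card_at => //; apply: ltnW.
have h2 : #|G2 s t| <= 1 by apply: card_at => //; apply: ltnW.
move: hx hy; rewrite !inE => /andP[fx px] /andP[fy py].
have inN : (x, y) \in NNs s t.
  by rewrite inE /= fx fy /=; apply: (@met_intro _ _ t _ _ t) => //; rewrite /br px py.
have outN : (x, y) \notin NNs s t.+1.
  rewrite inE /= negb_and; apply/orP; left; rewrite /= negb_and; apply/orP; right.
  rewrite PvS // -leqNgt.
  have := (b_map (hm t ht) hb (pos s t x)).1.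
  by move: px; rewrite /Pv => ->  /eqP ->.
rewrite (cardsD1 (x, y) (NNs s t)) inN.
have : #|NNs s t.+1| <= #|NNs s t :\ (x, y)|.
  apply: subset_leq_card; apply/subsetP => z hz; rewrite in_setD1 (subsetP sub z hz) andbT.
  by apply/eqP => e; move: outN; rewrite -e hz.
move=> h; have : #|G1 s t| * #|G2 s t| <= 1 by nia.
move=> hg; rewrite /= addnC; exact: leq_add.
Qed.

Lemma arith1 a b N : a <= 1 -> b <= 1 -> N <= a * b -> N + ((a + b) == 1) <= 1.
Proof. by case: a => [|[|]] //; case: b => [|[|]] //=; case: N => [|[|]]. Qed.

Lemma inv n (s : seq ('I_n -> 'I_n)) : Hm s -> forall t, t <= size s ->
  exists w, #|pps s t| <= w /\ #|qqs s t| <= w /\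
            2 * w + #|NNs s t| + ((#|G1 s t| + #|G2 s t|) == 1) <= t.+1.
Proof.
move=> hm; elim=> [|t IH] ht.
  exists 0; split.
    by rewrite leqn0; apply/eqP; apply: eq_card0 => x; rewrite inE /= andbN.
  split.
    by rewrite leqn0; apply/eqP; apply: eq_card0 => x; rewrite inE /= andbN.
  have h1 : #|G1 s 0| <= 1 by apply: card_at.
  have h2 : #|G2 s 0| <= 1 by apply: card_at.
  have h3 : #|NNs s 0| <= #|G1 s 0| * #|G2 s 0|.
    rewrite -cardsX; apply: subset_leq_card; apply/subsetP => [[x y]]; rewrite !inE /=.
    by case/and3P => -> -> /andP[-> ->].
  rewrite muln0 add0n; exact: arith1.
have ht' : t < size s by [].
have [w [hp [hq hN]]] := IH (ltnW ht).
have g1 : #|G1 s t| <= 1 by apply: card_at => //; apply: ltnW.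
have g2 : #|G2 s t| <= 1 by apply: card_at => //; apply: ltnW.
have g1' : #|G1 s t.+1| <= 1 by apply: card_at.
have g2' : #|G2 s t.+1| <= 1 by apply: card_at.
case: (boolP (Bg (nth id s t))) => hb.
  rewrite (b_G1 hm ht' hb) (b_G2 hm ht' hb) /=.
  have hpp : #|pps s t.+1| <= #|pps s t| + #|G1 s t| := pp_step hm ht'.
  have hqq : #|qqs s t.+1| <= #|qqs s t| + #|G2 s t| := qq_step hm ht'.
  have hNN : #|NNs s t.+1| + #|G1 s t| * #|G2 s t| <= #|NNs s t| := b_NN hm ht' hb.
  move: hpp hqq hNN hN g1 g2 hp hq.
  move: (#|G1 s t|) (#|G2 s t|) (#|pps s t|) (#|pps s t.+1|) (#|qqs s t|) (#|qqs s t.+1|)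
    (#|NNs s t|) (#|NNs s t.+1|) => a b p0 p1 q0 q1 N0 N1.
  case: a => [|[|a]] //; case: b => [|[|b]] //= => hpp hqq hNN hN _ _ hp hq.
  - exists w; lia.
  - exists w.+1; lia.
  - exists w.+1; lia.
  - exists w.+1; lia.
have ep : pps s t.+1 = pps s t by apply/setP => x; rewrite !inE nb_fA.
have eq : qqs s t.+1 = qqs s t by apply/setP => x; rewrite !inE nb_fB.
rewrite ep eq; exists w; split => //; split => //.
have hNN : #|NNs s t.+1| <= #|NNs s t| + #|G1 s t.+1| * #|G2 s t.+1| := NN_nb hm ht' hb.
have har := arith1 g1' g2' (leqnn _).
have hc := leq_b1 ((#|G1 s t| + #|G2 s t|) == 1).
move: hNN hN har hc.
move: (#|G1 s t.+1|) (#|G2 s t.+1|) (#|NNs s t.+1|) (#|NNs s t|) ((#|G1 s t| + #|G2 s t|) == 1) => a' b' N1 N0 c.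
move: (a' * b') ((a' + b') == 1) => ab d.
lia.
Qed.

Lemma lb_barbell n (s : seq ('I_n -> 'I_n)) : 2 <= n ->
  acq_strategy (barbell_graph n) s -> n - 2 <= size s.
Proof.
move=> hn [hm ha].
have hf := half_facts n.
have [w [hp [hq hN]]] := inv hm (leqnn (size s)).
set L := size s in hp hq hN.
set FA := [set x : 'I_n | fA s L x].
set FB := [set x : 'I_n | fB s L x].
have hNN : NNs s L = setX FA FB.
  apply/setP => [[x y]]; rewrite !inE /=; apply/idP/idP.
    by case/and3P => -> ->.
  case/andP => hx hy; rewrite hx hy /=.
  have hx0 := fA_all hx (leq0n L); have hy0 := fB_all hy (leq0n L).
  rewrite Pv0 in hx0; rewrite Pv0 in hy0.
  have hxy : x != y by apply/eqP => e; move: hx0; rewrite e; lia.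
  have [j [hj he]] := ha x y hxy.
  have [e1 e2] := cross he (fA_all hx hj) (fB_all hy hj).
  by apply: (met_intro hj); rewrite /br /Pv e1 e2 !eqxx.
have hA : #|pps s L| + #|FA| = cc n.
  rewrite -(card_lt (_ : cc n <= n)); last by lia.
  rewrite -(cardsID FA [set x : 'I_n | x < cc n]) addnC; congr (_ + _); apply: eq_card => x.
    rewrite !inE; case hx: (fA s L x); last by case: (_ < _).
    by have := fA_all hx (leq0n L); rewrite Pv0 => ->.
  by rewrite /pps /FA !inE andbC.
have hB : #|qqs s L| + #|FB| = n - cc n.
  have hc : #|[set x : 'I_n | cc n <= x]| = n - cc n.
    have := cardsC [set x : 'I_n | x < cc n]; rewrite card_ord card_lt; last by lia.
    have -> : ~: [set x : 'I_n | x < cc n] = [set x : 'I_n | cc n <= x].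
      by apply/setP => x; rewrite !inE -leqNgt.
    lia.
  rewrite -hc -(cardsID FB [set x : 'I_n | cc n <= x]) addnC; congr (_ + _); apply: eq_card => x.
    rewrite !inE; case hx: (fB s L x); last by case: (_ <= _).
    by have := fB_all hx (leq0n L); rewrite Pv0 => ->.
  by rewrite /qqs /FB !inE andbC.
rewrite hNN cardsX in hN.
have hc := leq_b1 ((#|G1 s L| + #|G2 s L|) == 1).
move: hN hc hA hB hp hq.
move: ((#|G1 s L| + #|G2 s L|) == 1) (#|pps s L|) (#|qqs s L|) (#|FA|) (#|FB|) => c p q a b.
move=> hN hc hA hB hp hq.
case: (posnP a) => ha0.
  rewrite ha0 in hN; lia.
case: (posnP b) => hb0.
  rewrite hb0 muln0 in hN; lia.
have : a + b <= a * b + 1 by nia.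
lia.
Qed.


Theorem theorem3p1 (n : nat) (hn : 2 <= n) :
  acq_time_is (path_graph n) (n - 2) /\ acq_time_is (barbell_graph n) (n - 2).
Proof.
split; split.
- exists (strat n); split; [by rewrite size_mkseq | exact: strat_ok].
- move=> s hs; apply: lb_barbell => //; apply: strat_mono hs; exact: path_sub_barbell.
- exists (strat n); split; first by rewrite size_mkseq.
  apply: strat_mono (strat_ok hn); exact: path_sub_barbell.
- move=> s hs; exact: lb_barbell.
Qed.
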